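(* For every $\gamma>0$, the matrix $\gamma 1$ is the unique strictly positive fixed point of the noncommutative Ricci flow having trace $n\gamma$; that is, if $c\in M_n$ is strictly positive with $\triangle\log c=0$ and $\tau(c)=n\gamma$, then $c=\gamma 1$.
   Context: Let $n\ge 2$, let $m\in\{1,\dots,n-1\}$ be relatively prime to $n$, and set $q=e^{2\pi i m/n}$. Let $M_n$ be the algebra of complex $n\times n$ matrices with identity $1$. Let $u=\mathrm{diag}(1,q,\dots,q^{n-1})$ and let $v$ be the cyclic shift matrix with $v_{j,j+1}=1$ for $j=1,\dots,n-1$, $v_{n,1}=1$, other entries $0$. Let $x,y$ be any Hermitian matrices with $u=e^{\frac{2\pi i}{n}x}$ and $v=e^{\frac{2\pi i}{n}y}$. Define $\delta_1(a)=[y,a]$, $\delta_2(a)=-[x,a]$ and $\triangle=\delta_1^2+\delta_2^2$ on $M_n$. $\tau$ is the usual trace; $\log$ of a strictly positive matrix is defined by functional calculus. The noncommutative Ricci flow is $\frac{d}{dt}c(t)=-\triangle\log c(t)$. *)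

(* Defs.v *)
(* complex numbers over Stdlib reals, n x n complex matrices
   represented as functions nat -> nat -> C, only entries with indices < n matter. *)
From Stdlib Require Import Reals Lra Lia.
Open Scope R_scope.

Record C := mkC { Re : R; Im : R }.

Definition C0 : C := mkC 0 0.
Definition C1 : C := mkC 1 0.
Definition RtoC (r : R) : C := mkC r 0.
Definition Cadd (a b : C) : C := mkC (Re a + Re b) (Im a + Im b).
Definition Copp (a : C) : C := mkC (- Re a) (- Im a).
Definition Cmul (a b : C) : C :=
  mkC (Re a * Re b - Im a * Im b) (Re a * Im b + Im a * Re b).
Definition Cconj (a : C) : C := mkC (Re a) (- Im a).
Definition cis (t : R) : C := mkC (cos t) (sin t).

Fixpoint Csum (k : nat) (f : nat -> C) : C :=
  match k with
  | O => C0
  | S k' => Cadd (Csum k' f) (f k')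
  end.

Definition Mat := nat -> nat -> C.

Definition Mmul (n : nat) (A B : Mat) : Mat :=
  fun i j => Csum n (fun k => Cmul (A i k) (B k j)).
Definition Madd (A B : Mat) : Mat := fun i j => Cadd (A i j) (B i j).
Definition Mopp (A : Mat) : Mat := fun i j => Copp (A i j).
Definition Msub (A B : Mat) : Mat := Madd A (Mopp B).
Definition Madj (A : Mat) : Mat := fun i j => Cconj (A j i).
Definition Mdiag (d : nat -> C) : Mat :=
  fun i j => if Nat.eqb i j then d i else C0.
Definition Mid : Mat := Mdiag (fun _ => C1).
Definition Mzero : Mat := fun _ _ => C0.
Definition Mscal (a : C) (A : Mat) : Mat := fun i j => Cmul a (A i j).
Definition Mtrace (n : nat) (A : Mat) : C := Csum n (fun i => A i i).

Definition Meq (n : nat) (A B : Mat) : Prop :=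
  forall i j, (i < n)%nat -> (j < n)%nat -> A i j = B i j.

Definition hermitian (n : nat) (A : Mat) : Prop := Meq n (Madj A) A.

Definition unitary (n : nat) (U : Mat) : Prop :=
  Meq n (Mmul n U (Madj U)) Mid /\ Meq n (Mmul n (Madj U) U) Mid.

Definition strictly_positive (n : nat) (A : Mat) : Prop :=
  hermitian n A /\
  forall v : nat -> C, (exists k, (k < n)%nat /\ v k <> C0) ->
    Re (Csum n (fun i => Cmul (Cconj (v i)) (Csum n (fun j => Cmul (A i j) (v j))))) > 0.

(* Functional calculus for self-adjoint matrices: B = f(A), where
   A = U diag(d) U^* with U unitary and d real, and B = U diag(f d) U^*.
   (Defined relationally; f(A) is independent of the chosen diagonalisation.) *)
Definition fcalc (n : nat) (dom : R -> Prop) (f : R -> C) (A B : Mat) : Prop :=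
  exists (U : Mat) (d : nat -> R),
    unitary n U /\ (forall k, (k < n)%nat -> dom (d k)) /\
    Meq n A (Mmul n (Mmul n U (Mdiag (fun k => RtoC (d k)))) (Madj U)) /\
    Meq n B (Mmul n (Mmul n U (Mdiag (fun k => f (d k)))) (Madj U)).

Definition is_log (n : nat) (c L : Mat) : Prop :=
  fcalc n (fun t => 0 < t) (fun t => RtoC (ln t)) c L.

Definition is_exp2pi (n : nat) (x u : Mat) : Prop :=
  fcalc n (fun _ => True) (fun t => cis (2 * PI * t / INR n)) x u.

Definition qpow (n m j : nat) : C := cis (2 * PI * INR m * INR j / INR n).
Definition umat (n m : nat) : Mat := Mdiag (fun j => qpow n m j).
Definition vmat (n : nat) : Mat :=
  fun i j => if Nat.eqb j (Nat.modulo (S i) n) then C1 else C0.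

Definition comm (n : nat) (A B : Mat) : Mat := Msub (Mmul n A B) (Mmul n B A).
Definition delta1 (n : nat) (x y a : Mat) : Mat := comm n y a.
Definition delta2 (n : nat) (x y a : Mat) : Mat := Mopp (comm n x a).
Definition lap (n : nat) (x y a : Mat) : Mat :=
  Madd (delta1 n x y (delta1 n x y a)) (delta2 n x y (delta2 n x y a)).

(* Main.v *)
Require Import Defs.
From Stdlib Require Import Reals Lra Lia.
Open Scope R_scope.

Module Work.
From Stdlib Require Import Reals Lra Lia ZArith Znumtheory.
From mathcomp Require Import all_boot all_order all_algebra.
From mathcomp Require Import Rstruct.
From mathcomp Require Import complex.
Import Order.TTheory GRing.Theory Num.Theory.
Import Defs.
From Stdlib Require Import Reals Lra Lia.
From mathcomp Require Import all_boot all_order all_algebra.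
From mathcomp Require Import Rstruct.
From mathcomp Require Import complex.
Import Order.TTheory GRing.Theory Num.Theory.
Import Defs.

Local Notation K := (complex.complex R).

Definition madj {n} (A : 'M[K]_n) : 'M[K]_n := (map_mx Num.conj A)^T.

Section Alg.
Local Open Scope ring_scope.
Variable n : nat.
Implicit Types A B P X L M Z : 'M[K]_n.

Lemma madjM A B : madj (A *m B) = madj B *m madj A.
Proof. by rewrite /madj map_mxM trmx_mul. Qed.
Lemma madjK A : madj (madj A) = A.
Proof. by apply/matrixP=> i j; rewrite !mxE conjCK. Qed.
Lemma madjB A B : madj (A - B) = madj A - madj B.
Proof. by apply/matrixP=> i j; rewrite !mxE rmorphB. Qed.
Lemma madjE A i j : madj A i j = (A j i)^*.
Proof. by rewrite !mxE. Qed.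

Lemma tr_adj A : \tr (madj A *m A) = \sum_i \sum_k `|A k i| ^+ 2.
Proof.
rewrite /mxtrace; apply: eq_bigr => i _; rewrite mxE; apply: eq_bigr => k _.
by rewrite madjE normCK mulrC.
Qed.
Lemma tr_adj_ge0 A : 0 <= \tr (madj A *m A).
Proof. by rewrite tr_adj; apply: sumr_ge0 => i _; apply: sumr_ge0 => k _; apply: exprn_ge0. Qed.
Lemma tr_adj_eq0 A : \tr (madj A *m A) = 0 -> A = 0.
Proof.
rewrite tr_adj => /psumr_eq0P H; apply/matrixP => k i; rewrite mxE.
have Hi := H (fun i _ => sumr_ge0 _ (fun k _ => exprn_ge0 2 (normr_ge0 (A k i)))) i isT.
move/psumr_eq0P: Hi => Hk.
have := Hk (fun k _ => exprn_ge0 2 (normr_ge0 (A k i))) k isT.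
by move/eqP; rewrite sqrf_eq0 normr_eq0 => /eqP.
Qed.

Lemma tr_key0 L Z M : \tr (L *m (Z *m M - M *m Z)) = \tr ((L *m Z - Z *m L) *m M).
Proof.
rewrite mulmxBr mulmxBl !raddfB /= (mulmxA L Z M) (mulmxA L M Z).
by rewrite [\tr (L *m M *m Z)]mxtrace_mulC mulmxA.
Qed.

Lemma tr_key L Z : madj Z = Z -> madj L = L ->
  \tr (L *m (Z *m (Z *m L - L *m Z) - (Z *m L - L *m Z) *m Z))
  = \tr (madj (Z *m L - L *m Z) *m (Z *m L - L *m Z)).
Proof.
move=> hZ hL; rewrite tr_key0; congr (\tr (_ *m _)).
by rewrite madjB !madjM hZ hL.
Qed.

Lemma step1 X Y L : madj X = X -> madj Y = Y -> madj L = L ->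
  Y *m (Y *m L - L *m Y) - (Y *m L - L *m Y) *m Y
  + (X *m (X *m L - L *m X) - (X *m L - L *m X) *m X) = 0 ->
  Y *m L = L *m Y /\ X *m L = L *m X.
Proof.
move=> hX hY hL H.
have := congr1 (fun M => \tr (L *m M)) H => /=.
rewrite mulmxDr mxtraceD tr_key // tr_key // mulmx0 mxtrace0.
move/eqP; rewrite paddr_eq0; try apply: tr_adj_ge0.
case/andP => /eqP/tr_adj_eq0/eqP h1 /eqP/tr_adj_eq0/eqP h2.
by split; apply/eqP; rewrite -subr_eq0.
Qed.

Lemma step2 P (d f : 'rV[K]_n) A :
  P *m madj P = 1%:M -> madj P *m P = 1%:M ->
  (forall i j, d 0 i = d 0 j -> f 0 i = f 0 j) ->
  A *m (P *m diag_mx d *m madj P) = (P *m diag_mx d *m madj P) *m A ->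
  A *m (P *m diag_mx f *m madj P) = (P *m diag_mx f *m madj P) *m A.
Proof.
move=> uP uP' hdf H.
pose B := madj P *m A *m P.
have hB : B *m diag_mx d = diag_mx d *m B.
  have E := congr1 (fun M => madj P *m M *m P) H; rewrite /= !mulmxA in E.
  rewrite -(mulmxA _ (madj P) P) uP' mulmx1 mul1mx in E.
  by rewrite /B !mulmxA.
have hA : A = P *m B *m madj P.
  by rewrite /B !mulmxA uP mul1mx -mulmxA uP mulmx1.
clearbody B.
have hF : B *m diag_mx f = diag_mx f *m B.
  apply/matrixP => i j; move/matrixP: hB => /(_ i j).
  rewrite !mul_mx_diag !mul_diag_mx !mxE => E.
  have [->|nz] := eqVneq (B i j) 0; first by rewrite mulr0 mul0r.
  rewrite (hdf i j); first by rewrite mulrC.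
  by apply: (mulfI nz); rewrite E mulrC.
rewrite hA !mulmxA.
rewrite -(mulmxA (P *m B)) uP' mulmx1 -(mulmxA (P *m diag_mx f)) uP' mulmx1.
by rewrite -(mulmxA P B) hF mulmxA.
Qed.

Lemma step3a (q : 'rV[K]_n) A : (forall i j, q 0 i = q 0 j -> i = j) ->
  A *m diag_mx q = diag_mx q *m A -> forall i j, i != j -> A i j = 0.
Proof.
move=> hq /matrixP H i j ne; move: (H i j); rewrite mul_mx_diag mul_diag_mx !mxE.
move=> /eqP; rewrite [q 0 i * _]mulrC -subr_eq0 -mulrBr mulf_eq0 subr_eq0.
case/orP => [/eqP //|/eqP E]; have := hq _ _ E => E'; by rewrite E' eqxx in ne.
Qed.

Lemma step3b (Vm A : 'M[K]_n) (i0 : 'I_n) : val i0 = 0%N ->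
  (forall i j, i != j -> A i j = 0) -> A *m Vm = Vm *m A ->
  (forall i j : 'I_n, val j = (val i).+1 -> Vm i j = 1) -> A = (A i0 i0)%:M.
Proof.
move=> h0 hd H hV.
have hstep : forall i j : 'I_n, val j = (val i).+1 -> A i i = A j j.
  move=> i j hij; move/matrixP: H => /(_ i j); rewrite !mxE.
  rewrite (bigD1 i) //= big1; last by move=> k hk; rewrite hd ?mul0r // eq_sym.
  rewrite (bigD1 j) //= big1; last by move=> k hk; rewrite (hd k j) ?mulr0.
  by rewrite !addr0 hV // mulr1 mul1r.
have claim : forall k (hk : (k < n)%N), A (Ordinal hk) (Ordinal hk) = A i0 i0.
  elim => [|k IH] hk.
    by have -> : Ordinal hk = i0 by apply: val_inj; rewrite /= h0.
  have hk' : (k < n)%N by apply: ltnW.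
  by rewrite -(hstep (Ordinal hk') (Ordinal hk)) // IH.
apply/matrixP => i j; rewrite mxE.
have [<-|ne] := eqVneq i j.
  by rewrite mulr1n; case: i => k hk; rewrite claim.
by rewrite hd // mulr0n.
Qed.

Lemma conj_scalar Q c : Q *m madj Q = 1%:M -> Q *m (c%:M : 'M[K]_n) *m madj Q = c%:M.
Proof. by move=> uQ; rewrite mul_mx_scalar -scalemxAl uQ scalemx1. Qed.

Lemma step4 Q (l : 'rV[K]_n) lam : Q *m madj Q = 1%:M -> madj Q *m Q = 1%:M ->
  Q *m diag_mx l *m madj Q = lam%:M -> forall k, l 0 k = lam.
Proof.
move=> uQ uQ' H k.
have : diag_mx l = madj Q *m (Q *m diag_mx l *m madj Q) *m Q.
  by rewrite !mulmxA uQ' mul1mx -mulmxA uQ' mulmx1.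
rewrite H; have := conj_scalar (madj Q) lam; rewrite madjK => -> //.
move=> /matrixP /(_ k k); rewrite !mxE !eqxx !mulr1n.
by [].
Qed.

Lemma diag_const (e : 'rV[K]_n) c : (forall k, e 0 k = c) -> diag_mx e = c%:M.
Proof. by move=> h; apply/matrixP => i j; rewrite !mxE h. Qed.

Lemma herm_diag Q (l : 'rV[K]_n) : (forall k, (l 0 k)^* = l 0 k) ->
  madj (Q *m diag_mx l *m madj Q) = Q *m diag_mx l *m madj Q.
Proof.
move=> h; rewrite !madjM madjK mulmxA; congr (_ *m _ *m _).
apply/matrixP => i j; rewrite !mxE.
case: (eqVneq i j) => [->|ne]; first by rewrite !mulr1n; apply: h.
by rewrite !mulr0n rmorph0.
Qed.
End Alg.

Section Conv.
Local Open Scope ring_scope.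

Definition phi (a : Defs.C) : K := complex.Complex (Defs.Re a) (Defs.Im a).
Lemma phiD a b : phi (Cadd a b) = phi a + phi b. Proof. reflexivity. Qed.
Lemma phiM a b : phi (Cmul a b) = phi a * phi b. Proof. reflexivity. Qed.
Lemma phiC a : phi (Cconj a) = (phi a)^*. Proof. reflexivity. Qed.
Lemma phi0 : phi C0 = 0. Proof. reflexivity. Qed.
Lemma phi1 : phi C1 = 1. Proof. reflexivity. Qed.
Lemma phiO a : phi (Copp a) = - phi a. Proof. reflexivity. Qed.
Lemma phi_inj a b : phi a = phi b -> a = b.
Proof. by case: a => ? ?; case: b => ? ? [-> ->]. Qed.

Lemma phi_sum k f : phi (Csum k f) = \sum_(i < k) phi (f i).
Proof.
elim: k => [|k IH]; first by rewrite big_ord0.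
by rewrite big_ord_recr /= phiD IH.
Qed.

Definition toM (n : nat) (A : Mat) : 'M[K]_n := \matrix_(i < n, j < n) phi (A i j).

Lemma toM_mul n A B : toM n (Mmul n A B) = toM n A *m toM n B.
Proof.
apply/matrixP => i j; rewrite !mxE /Mmul phi_sum.
by apply: eq_bigr => k _; rewrite phiM !mxE.
Qed.
Lemma toM_add n A B : toM n (Madd A B) = toM n A + toM n B.
Proof. by apply/matrixP => i j; rewrite !mxE /Madd phiD. Qed.
Lemma toM_opp n A : toM n (Mopp A) = - toM n A.
Proof. by apply/matrixP => i j; rewrite !mxE /Mopp phiO. Qed.
Lemma toM_sub n A B : toM n (Msub A B) = toM n A - toM n B.
Proof. by rewrite /Msub toM_add toM_opp. Qed.
Lemma toM_adj n A : toM n (Madj A) = madj (toM n A).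
Proof. by apply/matrixP => i j; rewrite !mxE /Madj phiC. Qed.
Lemma toM_diag n d : toM n (Mdiag d) = diag_mx (\row_k phi (d k)).
Proof.
apply/matrixP => i j; rewrite !mxE /Mdiag.
case: (eqVneq i j) => [->|ne].
  by rewrite Nat.eqb_refl mulr1n.
have -> : Nat.eqb i j = false.
  apply/Nat.eqb_neq => E; move: ne; rewrite -val_eqE /= E eqxx //.
by rewrite mulr0n phi0.
Qed.
Lemma toM_id n : toM n Mid = 1%:M.
Proof.
rewrite /Mid toM_diag; apply/matrixP => i j; rewrite !mxE phi1 //.
Qed.
Lemma toM_zero n : toM n Mzero = 0.
Proof. by apply/matrixP => i j; rewrite !mxE. Qed.
Lemma toM_scal n a A : toM n (Mscal a A) = phi a *: toM n A.
Proof. by apply/matrixP => i j; rewrite !mxE /Mscal phiM. Qed.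
Lemma toM_trace n A : phi (Mtrace n A) = \tr (toM n A).
Proof. rewrite /Mtrace phi_sum /mxtrace; apply: eq_bigr => i _; by rewrite mxE. Qed.

Lemma MeqP n A B : Meq n A B <-> toM n A = toM n B.
Proof.
split.
  by move=> H; apply/matrixP => i j; rewrite !mxE H //; apply/ssrnat.ltP.
move=> /matrixP H i j hi hj; apply: phi_inj.
have := H (Ordinal (introT ssrnat.ltP hi)) (Ordinal (introT ssrnat.ltP hj)); by rewrite !mxE.
Qed.

End Conv.

Section More.
Local Open Scope ring_scope.
Lemma negneg n (a b : 'M[K]_n) : -(- a - - b) = a - b.
Proof. by rewrite opprB opprK addrC. Qed.
Lemma phi_real r : (phi (RtoC r))^* = phi (RtoC r).
Proof. by rewrite -phiC /Cconj /RtoC /= Ropp_0. Qed.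
End More.

Open Scope R_scope.
Open Scope R_scope.

Lemma cis_eq a b : cis a = cis b -> exists k : Z, a - b = 2 * (IZR k * PI).
Proof.
intros H. injection H as Hc Hs.
assert (H1 : cos (a - b) = 1).
{ rewrite cos_minus -Hc -Hs. pose proof (sin2_cos2 a). unfold Rsqr in H. lra. }
assert (H2 : sin ((a - b) / 2) = 0).
{ pose proof (cos_2a_sin ((a - b) / 2)) as E.
  replace (2 * ((a - b) / 2)) with (a - b) in E by field. rewrite H1 in E.
  assert (H0 : sin ((a-b)/2) * sin ((a-b)/2) = 0) by lra.
  destruct (Rmult_integral _ _ H0); auto. }
destruct (sin_eq_0_0 _ H2) as [k Hk]. exists k. lra.
Qed.

Section ZZ.
Local Open Scope Z_scope.
Lemma zdiv_lemma (m n i j : nat) k : (1 <= m)%coq_nat -> Nat.gcd m n = 1%N -> (i < n)%coq_nat -> (j < n)%coq_nat ->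
  Z.of_nat m * (Z.of_nat i - Z.of_nat j) = k * Z.of_nat n -> i = j.
Proof.
move=> hm hg hi hj E.
destruct (Nat.gcd_bezout_pos m n) as [c [d hb]]; first lia.
rewrite hg in hb.
assert (hb' : (Z.of_nat c * Z.of_nat m = 1 + Z.of_nat d * Z.of_nat n)) by lia.
assert (hz : (Z.of_nat i - Z.of_nat j = (Z.of_nat c * k - Z.of_nat d * (Z.of_nat i - Z.of_nat j)) * Z.of_nat n)).
{ transitivity ((Z.of_nat c * Z.of_nat m - Z.of_nat d * Z.of_nat n) * (Z.of_nat i - Z.of_nat j)).
  - rewrite hb'. ring.
  - rewrite Z.mul_sub_distr_r -Z.mul_assoc E. ring. }
set z := (Z.of_nat c * k - Z.of_nat d * (Z.of_nat i - Z.of_nat j)) in hz.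
clearbody z.
destruct (Z.lt_trichotomy z 0) as [hz0|[hz0|hz0]]; [nia| subst; lia | nia].
Qed.
End ZZ.

Lemma qpow_inj n m i j : (1 <= n)%coq_nat -> (1 <= m)%coq_nat -> Nat.gcd m n = 1%nat -> (i < n)%coq_nat -> (j < n)%coq_nat ->
  qpow n m i = qpow n m j -> i = j.
Proof.
intros hn hm hg hi hj H. unfold qpow in H. apply cis_eq in H. destruct H as [k Hk].
assert (hn' : 0 < INR n) by (apply lt_0_INR; lia).
assert (E : INR m * (INR i - INR j) = IZR k * INR n).
{ assert (PI > 0) by apply PI_RGT_0.
  replace (INR m * (INR i - INR j)) with
    ((2 * PI * INR m * INR i / INR n - 2 * PI * INR m * INR j / INR n) * INR n / (2 * PI))
    by (field; lra).
  rewrite Hk. field; lra. }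
rewrite !INR_IZR_INZ -minus_IZR -!mult_IZR in E. apply eq_IZR in E.
exact: (zdiv_lemma m n i j k).
Qed.

Lemma Csum_const n a (f : nat -> Defs.C) : (forall i, (i < n)%coq_nat -> f i = RtoC a) ->
  Csum n f = RtoC (INR n * a).
Proof.
induction n as [|n IH]; intros H.
- simpl. unfold C0, RtoC. f_equal; lra.
- simpl Csum. rewrite IH; last (intros; apply H; lia). rewrite H; last lia.
  unfold Cadd, RtoC. rewrite [Defs.Re _]/= [Defs.Im _]/= (S_INR n). f_equal; simpl; lra.
Qed.

Open Scope R_scope.

Lemma core :
  forall (n m : nat),
    (2 <= n)%coq_nat -> (1 <= m /\ m <= n - 1)%coq_nat -> Nat.gcd m n = 1%N ->
    forall (x y : Mat),
      hermitian n x -> hermitian n y ->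
      is_exp2pi n x (umat n m) -> is_exp2pi n y (vmat n) ->
      forall (gamma : R), 0 < gamma ->
      forall (c L : Mat),
        strictly_positive n c ->
        is_log n c L ->
        Meq n (lap n x y L) Mzero ->
        Mtrace n c = RtoC (INR n * gamma) ->
        Meq n c (Mscal (RtoC gamma) Mid).
Proof.
move=> n m hn [hm1 hm2] hg x y hx hy [P [dx [[uP1 uP2] [_ [hX hU]]]]]
  [P' [dy [[uQ1 uQ2] [_ [hY hV]]]]] gamma hgam c L hc [Q [e [[uR1 uR2] [he [hC hL]]]]] hlap htr.
move/MeqP: hx; rewrite toM_adj => hx.
move/MeqP: hy; rewrite toM_adj => hy.
move/MeqP: uP1; rewrite !toM_mul toM_adj toM_id => uP1.
move/MeqP: uP2; rewrite !toM_mul toM_adj toM_id => uP2.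
move/MeqP: uQ1; rewrite !toM_mul toM_adj toM_id => uQ1.
move/MeqP: uQ2; rewrite !toM_mul toM_adj toM_id => uQ2.
move/MeqP: uR1; rewrite !toM_mul toM_adj toM_id => uR1.
move/MeqP: uR2; rewrite !toM_mul toM_adj toM_id => uR2.
move/MeqP: hX; rewrite !toM_mul toM_adj toM_diag => hX.
move/MeqP: hY; rewrite !toM_mul toM_adj toM_diag => hY.
move/MeqP: hU; rewrite !toM_mul toM_adj !toM_diag => hU.
move/MeqP: hV; rewrite !toM_mul toM_adj !toM_diag => hV.
move/MeqP: hC; rewrite !toM_mul toM_adj !toM_diag => hC.
move/MeqP: hL; rewrite !toM_mul toM_adj !toM_diag => hL.
move/MeqP: hlap; rewrite /lap /delta1 /delta2 /comm !(toM_add,toM_opp,toM_sub,toM_mul) toM_zero.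
rewrite mulmxN mulNmx negneg => hlap.
have hLh : madj (toM n L) = toM n L.
  by rewrite hL herm_diag // => k; rewrite mxE phi_real.
have [hYL hXL] := @step1 _ _ _ _ hx hy hLh hlap.
have hUL : (toM n L *m diag_mx (\row_k phi (qpow n m k)) = diag_mx (\row_k phi (qpow n m k)) *m toM n L)%R.
  rewrite hU; apply: (@step2 _ (toM n P) (\row_k phi (RtoC (dx k)))) => //.
    by move=> i j; rewrite !mxE => /(congr1 (@complex.Re R)) /= ->.
  by rewrite -hX.
have hVL : (toM n L *m toM n (vmat n) = toM n (vmat n) *m toM n L)%R.
  rewrite hV; apply: (@step2 _ (toM n P') (\row_k phi (RtoC (dy k)))) => //.
    by move=> i j; rewrite !mxE => /(congr1 (@complex.Re R)) /= ->.
  by rewrite -hY.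
have hoff : forall i j, i != j -> toM n L i j = 0%R.
  apply: (@step3a _ _ _ _ hUL).
  move=> i j; rewrite !mxE => /phi_inj /qpow_inj H; apply: val_inj; apply: H => //;
    try lia; apply/ssrnat.ltP; exact: ltn_ord.
have n0 : (0 < n)%N by apply/ssrnat.ltP; lia.
pose i0 : 'I_n := Ordinal n0.
have hshift : forall i j : 'I_n, val j = (val i).+1 -> toM n (vmat n) i j = 1%R.
  move=> i j hij; rewrite mxE /vmat.
  have E : Nat.modulo (S i) n = j.
    rewrite hij Nat.mod_small //; apply/ssrnat.ltP; rewrite -hij; exact: ltn_ord.
  by rewrite E Nat.eqb_refl phi1.
have hLs := @step3b _ _ _ i0 erefl hoff hVL hshift.
set lam := toM n L i0 i0 in hLs.
have hl := @step4 _ _ _ lam uR1 uR2 (etrans (esym hL) hLs).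
have hek : forall k, (k < n)%coq_nat -> e k = e 0%N.
  move=> k hk.
  have h1 := hl (Ordinal (introT ssrnat.ltP hk)).
  have h2 := hl i0.
  rewrite !mxE in h1 h2; rewrite -h2 in h1.
  move/(congr1 (@complex.Re R)): h1 => /= h1.
  apply: ln_inv => //; try apply: he => //; lia.
have hCs : toM n c = ((phi (RtoC (e 0%N)))%:M)%R.
  rewrite hC (@diag_const _ _ (phi (RtoC (e 0%N)))) ?conj_scalar // => k.
  by rewrite mxE hek //; apply/ssrnat.ltP.
have hM : Meq n c (Mscal (RtoC (e 0%N)) Mid).
  by apply/MeqP; rewrite toM_scal toM_id scalemx1.
have htr2 : Mtrace n c = RtoC (INR n * e 0%N).
  apply: Csum_const => i hi; rewrite hM // /Mscal /Mid /Mdiag Nat.eqb_refl.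
  rewrite /Cmul /RtoC /C1 /=; f_equal; lra.
have he0 : e 0%N = gamma.
  rewrite htr in htr2; move/(congr1 Defs.Re): htr2 => /= h.
  have hn0 : 0 < INR n by apply: lt_0_INR; lia.
  nra.
by rewrite -he0.
Qed.

End Work.

Open Scope R_scope.

Theorem mainTheorem4 :
  forall (n m : nat),
    (2 <= n)%nat -> (1 <= m <= n - 1)%nat -> Nat.gcd m n = 1%nat ->
    forall (x y : Mat),
      hermitian n x -> hermitian n y ->
      is_exp2pi n x (umat n m) -> is_exp2pi n y (vmat n) ->
      forall (gamma : R), 0 < gamma ->
      forall (c L : Mat),
        strictly_positive n c ->
        is_log n c L ->
        Meq n (lap n x y L) Mzero ->
        Mtrace n c = RtoC (INR n * gamma) ->
        Meq n c (Mscal (RtoC gamma) Mid).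
Proof.
  exact Work.core.
Qed.
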